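(* Let $A$ be a row-finite $\omega\times\omega$ complex matrix with finite deficiency, and let $H=(h_{ij})=QA$ be a quasi-Hermite form of $A$ ($Q$ nonsingular row-finite). Let $j_0<j_1<\cdots$ be the indices of the nonzero rows of $H$ and $\mu_n=\ell(H_{j_n})$, and let $S=\omega\setminus\{\mu_0,\mu_1,\dots\}$ (the inaccessible row-lengths). For $s\in S$ define $\xi^{(s)}\in\mathbb{C}^\omega$ by $\xi^{(s)}_s=1$, $\xi^{(s)}_{\mu_n}=-h_{j_n s}$ for all $n$, and $\xi^{(s)}_t=0$ for $t\in S\setminus\{s\}$. Then $\{\xi^{(s)}\}_{s\in S}$ is a finite basis of the solution space $RNS(A)=\{y\in\mathbb{C}^\omega: Ay=0\}$; every $x\in RNS(A)$ equals $\sum_{s\in S}x_s\xi^{(s)}$, and $\dim RNS(A)=\operatorname{def}(A)$.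
   Context: $\omega=\{0,1,2,\dots\}$; $\mathbb{C}^\omega$ is the space of all complex sequences; $(Ay)_n=\sum_k a_{nk}y_k$. Row-finite: finitely many nonzero entries per row; nonsingular: invertible in the algebra of row-finite matrices. Length $\ell(x)$ of a finitely supported $x\neq0$: largest index of a nonzero coordinate. Quasi-Hermite form: with $J$ the indices of nonzero rows and $\ell_j=\ell(H_j)$, (i) $j<j'$ in $J$ implies $\ell_j<\ell_{j'}$; (ii) $h_{j\ell_j}=1$; (iii) $h_{m\ell_j}=0$ for all $m\neq j$. $\operatorname{def}(A)$ is the codimension of the row space of $A$ in the space of finitely supported sequences; it equals $\operatorname{card}(S)$. *)

(* Defs.v *)
From HB Require Import structures.
From mathcomp Require Import all_boot all_order all_algebra.
From Stdlib Require Import ClassicalEpsilon.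
Set Implicit Arguments. Unset Strict Implicit. Unset Printing Implicit Defensive.
Import GRing.Theory.
Local Open Scope ring_scope.

Section Defs.
Variable K : fieldType.

Definition fsupp (x : nat -> K) : Prop := exists N, forall k, (N <= k)%N -> x k = 0.

Definition row_finite (A : nat -> nat -> K) : Prop := forall i, fsupp (A i).

Definition idmat : nat -> nat -> K := fun i j => if i == j then 1 else 0.

Definition matmul_eq (P A C : nat -> nat -> K) : Prop :=
  forall i j, exists N, (forall k, (N <= k)%N -> P i k = 0) /\
    C i j = \sum_(k < N) P i k * A k j.

Definition nonsingular (Q : nat -> nat -> K) : Prop :=
  row_finite Q /\ exists P, row_finite P /\ matmul_eq P Q idmat /\ matmul_eq Q P idmat.

Definition rns (A : nat -> nat -> K) (y : nat -> K) : Prop :=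
  forall n, exists N, (forall k, (N <= k)%N -> A n k = 0) /\ \sum_(k < N) A n k * y k = 0.

Definition is_length (x : nat -> K) (l : nat) : Prop :=
  x l != 0 /\ forall k, (l < k)%N -> x k = 0.

Definition quasi_hermite (H : nat -> nat -> K) : Prop :=
  row_finite H /\
  (forall j j' l l', is_length (H j) l -> is_length (H j') l' -> (j < j')%N -> (l < l')%N) /\
  (forall j l, is_length (H j) l -> H j l = 1 /\ forall m, m != j -> H m l = 0).

Definition rowspace (A : nat -> nat -> K) (x : nat -> K) : Prop :=
  exists c : nat -> K, fsupp c /\
    forall k, exists N, (forall i, (N <= i)%N -> c i = 0) /\ x k = \sum_(i < N) c i * A i k.

(* codimension of the row space of A in the space of finitely supported sequences is d *)
Definition codim (A : nat -> nat -> K) (d : nat) : Prop :=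
  exists v : 'I_d -> nat -> K, (forall i, fsupp (v i)) /\
    (forall x, fsupp x -> exists a : 'I_d -> K,
        rowspace A (fun k => x k - \sum_(i < d) a i * v i k)) /\
    (forall a : 'I_d -> K, rowspace A (fun k => \sum_(i < d) a i * v i k) -> forall i, a i = 0).

Definition finite_deficiency (A : nat -> nat -> K) : Prop := exists d, codim A d.

Definition inaccessible (H : nat -> nat -> K) (t : nat) : Prop :=
  ~ exists j, is_length (H j) t.

Definition xi (H : nat -> nat -> K) (s t : nat) : K :=
  match excluded_middle_informative (exists j, is_length (H j) t) with
  | left P => - H (proj1_sig (constructive_indefinite_description _ P)) s
  | right _ => if t == s then 1 else 0
  end.

End Defs.

(* Main.v *)
Require Import Defs.
From HB Require Import structures.
From mathcomp Require Import all_boot all_order all_algebra.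
From Stdlib Require Import Classical ClassicalEpsilon.
Set Implicit Arguments. Unset Strict Implicit. Unset Printing Implicit Defensive.
Import GRing.Theory.
Local Open Scope ring_scope.

Definition vanish (K : fieldType) (f : nat -> K) N := forall k, (N <= k)%N -> f k = 0.

Lemma vanish_mono (K : fieldType) (f : nat -> K) N M : vanish f N -> (N <= M)%N -> vanish f M.
Proof. move=> h NM k Mk; apply: h; exact: leq_trans Mk. Qed.

Lemma sum_ext (K : fieldType) (F : nat -> K) N M :
  vanish F N -> vanish F M -> \sum_(k < N) F k = \sum_(k < M) F k.
Proof.
wlog NM : N M / (N <= M)%N.
  move=> W hN hM; case: (leqP N M) => h; first exact: W.
  by symmetry; apply: W => //; apply: ltnW.
move=> hN _.
rewrite -!(big_mkord xpredT) (big_cat_nat (leq0n N) NM) /= [X in _ + X]big_nat.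
rewrite [X in _ + X]big1 ?addr0 //.
by move=> k /andP[hk _]; apply: hN.
Qed.

Lemma ubound (K : fieldType) (g : nat -> nat -> K) Nx :
  (forall m, (m < Nx)%N -> exists N, vanish (g m) N) ->
  exists M, forall m, (m < Nx)%N -> vanish (g m) M.
Proof.
elim: Nx => [|n IH] h; first by exists 0%N.
have [M HM] : exists M, forall m, (m < n)%N -> vanish (g m) M.
  by apply: IH => m hm; apply: h; exact: ltnW.
have [N HN] := h n (ltnSn n).
exists (maxn M N) => m; rewrite ltnS leq_eqVlt => /orP[/eqP->|hm].
  by apply: vanish_mono HN _; rewrite leq_maxr.
by apply: vanish_mono (HM m hm) _; rewrite leq_maxl.
Qed.

Lemma sum_delta (K : fieldType) (F : nat -> K) N s :
  \sum_(t < N) F t * (if (t : nat) == s then 1 else 0) = if (s < N)%N then F s else 0.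
Proof.
case: ifP => hs.
  rewrite (bigD1 (Ordinal hs)) //= eqxx mulr1 big1 ?addr0 // => i hi.
  case: eqP => [e|]; last by rewrite mulr0.
  have ei : i = Ordinal hs by apply: val_inj.
  by rewrite ei eqxx in hi.
rewrite big1 // => i _; case: eqP => [e|]; last by rewrite mulr0.
by move: (ltn_ord i); rewrite e hs.
Qed.

Lemma sum_delta_l (K : fieldType) (F : nat -> K) N s :
  \sum_(t < N) (if s == (t : nat) then 1 else 0) * F t = if (s < N)%N then F s else 0.
Proof.
rewrite -(sum_delta F N s); apply: eq_bigr => i _; rewrite mulrC eq_sym //.
Qed.
Definition rs (K : fieldType) (M : nat -> nat -> K) (x : nat -> K) :=
  exists c N, vanish c N /\ forall k, x k = \sum_(i < N) c i * M i k.

Lemma rowspace_rs (K : fieldType) (M : nat -> nat -> K) x : rowspace M x <-> rs M x.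
Proof.
split.
  move=> [c [[N0 hN0] hk]]; exists c, N0; split => // k.
  have [N [hN ->]] := hk k.
  by apply: (@sum_ext _ (fun i => c i * M i k)) => i hi; [rewrite hN | rewrite hN0]; rewrite ?mul0r.
move=> [c [N [hN hk]]]; exists c; split; first by exists N.
by move=> k; exists N; split => //; apply: hk.
Qed.

Lemma rs_ext (K : fieldType) (M : nat -> nat -> K) x y : rs M y -> (forall k, x k = y k) -> rs M x.
Proof. by move=> [c [N [hN hk]]] e; exists c, N; split => // k; rewrite e hk. Qed.

Lemma rs0 (K : fieldType) (M : nat -> nat -> K) : rs M (fun _ => 0).
Proof. by exists (fun _ => 0), 0%N; split => // k; rewrite big_ord0. Qed.

Lemma rs_row (K : fieldType) (M : nat -> nat -> K) j : rs M (M j).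
Proof.
exists (fun i => if j == i then 1 else 0), j.+1; split.
  by move=> k hk; case: eqP => // e; move: hk; rewrite e ltnn.
by move=> k; rewrite (sum_delta_l (fun t => M t k)) ltnSn.
Qed.

Lemma rs_lin (K : fieldType) (M : nat -> nat -> K) x y a b :
  rs M x -> rs M y -> rs M (fun k => a * x k + b * y k).
Proof.
move=> [c [N [hN hk]]] [d [N' [hN' hk']]].
exists (fun i => a * c i + b * d i), (maxn N N'); split.
  by move=> k hk2; rewrite hN ?hN' ?mulr0 ?addr0 // (leq_trans _ hk2) // (leq_maxl, leq_maxr).
move=> k; rewrite hk hk' (@sum_ext _ (fun i => c i * M i k) N (maxn N N')); last 2 first.
- by move=> i hi; rewrite hN // mul0r.
- by move=> i hi; rewrite hN ?mul0r // (leq_trans _ hi) // leq_maxl.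
rewrite (@sum_ext _ (fun i => d i * M i k) N' (maxn N N')); last 2 first.
- by move=> i hi; rewrite hN' // mul0r.
- by move=> i hi; rewrite hN' ?mul0r // (leq_trans _ hi) // leq_maxr.
rewrite !mulr_sumr -big_split /=; apply: eq_bigr => i _.
by rewrite mulrDl !mulrA.
Qed.

Lemma rs_sum (K : fieldType) (M : nat -> nat -> K) n (c : 'I_n -> K) (f : 'I_n -> nat -> K) :
  (forall i, rs M (f i)) -> rs M (fun k => \sum_(i < n) c i * f i k).
Proof.
elim: n c f => [|n IH] c f h.
  by apply: rs_ext (rs0 M) _ => k; rewrite big_ord0.
apply: rs_ext (rs_lin 1 (c ord_max) (IH (fun i => c (widen_ord (leqnSn n) i)) (fun i => f (widen_ord (leqnSn n) i)) (fun i => h _)) (h ord_max)) _.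
by move=> k; rewrite big_ord_recr /= mul1r.
Qed.

Lemma sum_nat_rs (K : fieldType) (M : nat -> nat -> K) N (c : nat -> K) (f : nat -> nat -> K) :
  (forall i, rs M (f i)) -> rs M (fun k => \sum_(i < N) c i * f i k).
Proof. by move=> h; exact: (@rs_sum _ _ N (fun i : 'I_N => c i) (fun i : 'I_N => f i) (fun i => h i)). Qed.

Lemma rs_row_uniform (K : fieldType) (X Y Z : nat -> nat -> K) :
  matmul_eq X Y Z -> forall i, exists N, vanish (X i) N /\ forall k, Z i k = \sum_(m < N) X i m * Y m k.
Proof.
move=> h i; have [N [hN _]] := h i 0%N; exists N; split => // k.
have [N' [hN' ->]] := h i k.
by apply: (@sum_ext _ (fun m => X i m * Y m k)) => m hm; [rewrite hN' | rewrite hN]; rewrite ?mul0r.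
Qed.

Lemma L1 (K : fieldType) (X Y Z : nat -> nat -> K) : matmul_eq X Y Z -> forall i, rs Y (Z i).
Proof. by move=> h i; have [N [hN hk]] := rs_row_uniform h i; exists (X i), N. Qed.

Lemma rs_trans (K : fieldType) (X Y Z : nat -> nat -> K) x : matmul_eq X Y Z -> rs Z x -> rs Y x.
Proof.
move=> h [c [N [hN hk]]]; apply: rs_ext (sum_nat_rs N c (L1 h)) _ => k; exact: hk.
Qed.
Lemma L2 (K : fieldType) (P Q A H : nat -> nat -> K) :
  matmul_eq P Q (idmat K) -> matmul_eq Q A H -> matmul_eq P H A.
Proof.
move=> hPQ hQA i k.
have [Np [hNp hPQi]] := rs_row_uniform hPQ i.
exists Np; split => //.
have [M0 hM0] : exists M, forall m, (m < Np)%N -> vanish (Q m) M.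
  by apply: ubound => m _; have [N [hN _]] := rs_row_uniform hQA m; exists N.
pose M := maxn M0 i.+1.
have eH : forall m, (m < Np)%N -> H m k = \sum_(l < M) Q m l * A l k.
  move=> m hm; have [N1 [hN1 ->]] := rs_row_uniform hQA m.
  apply: (@sum_ext _ (fun l => Q m l * A l k)) => l hl; [by rewrite hN1 // mul0r | by rewrite hM0 ?mul0r // (leq_trans _ hl) // leq_maxl].
transitivity (\sum_(l < M) idmat K i l * A l k).
  by rewrite /idmat (sum_delta_l (fun l => A l k)) /M leq_max ltnSn orbT.
rewrite (eq_bigr (fun m : 'I_Np => \sum_(l < M) P i m * Q m l * A l k)); last first.
  by move=> m _; rewrite eH // mulr_sumr; apply: eq_bigr => l _; rewrite mulrA.
rewrite exchange_big /=; apply: eq_bigr => l _.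
by rewrite hPQi mulr_suml.
Qed.

Lemma L3 (K : fieldType) (X Y Z : nat -> nat -> K) x :
  matmul_eq X Y Z -> row_finite Z -> rns Y x -> rns Z x.
Proof.
move=> hXY hZ hY i.
have [Nx [hNx hXi]] := rs_row_uniform hXY i.
have [Nz hNz] := hZ i.
have [M0 hM0] : exists M, forall m, (m < Nx)%N -> vanish (Y m) M.
  by apply: ubound => m _; have [N [hN _]] := hY m; exists N.
exists (maxn Nz M0); split.
  by move=> k hk; apply: hNz; rewrite (leq_trans _ hk) // leq_maxl.
rewrite (eq_bigr (fun k : 'I_(maxn Nz M0) => \sum_(m < Nx) X i m * (Y m k * x k))); last first.
  by move=> k _; rewrite hXi mulr_suml; apply: eq_bigr => m _; rewrite mulrA.
rewrite exchange_big /= big1 // => m _.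
rewrite -mulr_sumr; have [N [hN hs]] := hY m.
rewrite -(@sum_ext _ (fun k => Y m k * x k) N) ?hs ?mulr0 // => k hk.
  by rewrite hN // mul0r.
by rewrite hM0 ?mul0r // (leq_trans _ hk) // leq_maxr.
Qed.
Lemma len_exists (K : fieldType) (x : nat -> K) k : fsupp x -> x k != 0 -> exists l, is_length x l.
Proof.
move=> [N hN]; elim: N hN k => [|N IH] hN k hk.
  by move: hk; rewrite hN // eqxx.
case: (eqVneq (x N) 0) => hxN.
  apply: (IH _ k hk) => i; rewrite leq_eqVlt => /orP[/eqP <-|]; [exact: hxN | exact: hN].
by exists N; split => // i hi; apply: hN.
Qed.

Lemma len_uniq (K : fieldType) (x : nat -> K) l l' : is_length x l -> is_length x l' -> l = l'.
Proof.
move=> [h1 h2] [h1' h2']; case: (ltngtP l l') => // hl.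
  by move: h1'; rewrite h2 ?eqxx.
by move: h1; rewrite h2' ?eqxx.
Qed.

Lemma qh_row_uniq (K : fieldType) (H : nat -> nat -> K) j j' l :
  quasi_hermite H -> is_length (H j) l -> is_length (H j') l -> j = j'.
Proof.
move=> [_ [_ h]] hj hj'; apply/eqP; apply/negP => /negP ne.
move: hj'.1; rewrite ((h j l hj).2 j') ?eqxx //; by rewrite eq_sym.
Qed.

Lemma xi_acc (K : fieldType) (H : nat -> nat -> K) j s t :
  quasi_hermite H -> is_length (H j) t -> xi H s t = - H j s.
Proof.
move=> hq hj; rewrite /xi; case: excluded_middle_informative => [P|nP]; last by exfalso; apply: nP; exists j.
case: constructive_indefinite_description => j' hj' /=.
by rewrite (qh_row_uniq hq hj hj').
Qed.

Lemma xi_inacc (K : fieldType) (H : nat -> nat -> K) s t :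
  inaccessible H t -> xi H s t = if t == s then 1 else 0.
Proof. by move=> ht; rewrite /xi; case: excluded_middle_informative. Qed.

Lemma zero_row (K : fieldType) (H : nat -> nat -> K) m k :
  quasi_hermite H -> (forall l, ~ is_length (H m) l) -> H m k = 0.
Proof.
move=> [hrf _] nl; apply/eqP; apply/negP => /negP hk.
by have [l hl] := len_exists (hrf m) hk; apply: (nl l).
Qed.

Lemma Hxi (K : fieldType) (H : nat -> nat -> K) s :
  quasi_hermite H -> inaccessible H s -> rns H (xi H s).
Proof.
move=> hq hs j; have [hrf [hlt hone]] := hq.
case: (classic (exists l, is_length (H j) l)) => [[l hl]|nl]; last first.
  exists 0%N; split; last by rewrite big_ord0.
  by move=> k _; apply: zero_row => // l hl; apply: nl; exists l.
exists l.+1; split; first by move=> k hk; apply: hl.2.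
rewrite big_ord_recr /= (xi_acc s hq hl) ((hone j l hl).1) mul1r.
rewrite (eq_bigr (fun t : 'I_l => H j t * (if (t:nat) == s then 1 else 0))); last first.
  move=> t _; case: (classic (exists j', is_length (H j') t)) => [[j' hj']|nt].
    have ne : j != j'.
      apply/eqP => e; rewrite -e in hj'; have e2 : (t : nat) = l := esym (len_uniq hl hj'); have := ltn_ord t; by rewrite [X in (X < _)%N]e2 ltnn.
    by rewrite ((hone j' t hj').2 j ne) !mul0r.
  by rewrite xi_inacc.
rewrite sum_delta; case: ifP => hsl; first by rewrite addrN.
have hls : (l < s)%N.
  rewrite ltn_neqAle leqNgt hsl andbT; apply/eqP => e; apply: hs; exists j; by rewrite -e.
by rewrite hl.2 // oppr0 addr0.
Qed.

Definition ev (K : fieldType) (s k : nat) : K := if k == s then 1 else 0.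

Lemma INDEP (K : fieldType) (H : nat -> nat -> K) n (f : 'I_n -> nat) (a : 'I_n -> K) :
  quasi_hermite H -> injective f -> (forall i, inaccessible H (f i)) ->
  rs H (fun k => \sum_(i < n) a i * ev K (f i) k) -> forall i, a i = 0.
Proof.
move=> hq finj fS [c [N [hN hk]]].
have [hrf [hlt hone]] := hq.
have cj : forall j l, is_length (H j) l -> c j = 0.
  move=> j l hl; case: (ltnP j N) => hjN; last exact: hN.
  move: (hk l); rewrite big1; last first.
    move=> i _; rewrite /ev; case: eqP => [e|]; last by rewrite mulr0.
    by exfalso; apply: (fS i); exists j; rewrite -e.
  rewrite (bigD1 (Ordinal hjN)) //= big1 ?addr0 ?(hone j l hl).1 ?mulr1 //.
  move=> m hm; rewrite ((hone j l hl).2 m) ?mulr0 //.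
move=> i0; move: (hk (f i0)).
rewrite (bigD1 i0) //= big1; last first.
  move=> i hi; rewrite /ev (inj_eq finj) eq_sym (negbTE hi) mulr0 //.
rewrite /ev eqxx mulr1 addr0 big1 // => m _.
case: (classic (exists l, is_length (H m) l)) => [[l hl]|nl].
  by rewrite (cj m l hl) mul0r.
by rewrite (zero_row (f i0) hq) ?mulr0 // => l hl; apply: nl; exists l.
Qed.
Lemma le_foldmax (L : seq nat) x : x \in L -> (x <= foldr maxn 0 L)%N.
Proof.
elim: L => //= y L IH; rewrite in_cons => /orP[/eqP ->|h]; first by rewrite leq_maxl.
by rewrite (leq_trans (IH h)) // leq_maxr.
Qed.

Lemma list_grow (K : fieldType) (H : nat -> nat -> K) :
  (forall B, exists s, (B <= s)%N /\ inaccessible H s) ->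
  forall n, exists L : seq nat, uniq L /\ size L = n /\ forall t, t \in L -> inaccessible H t.
Proof.
move=> g; elim => [|n [L [uL [sL LS]]]]; first by exists [::].
have [s [hs hS]] := g (foldr maxn 0 L).+1.
exists (s :: L); split; last split.
- rewrite /= uL andbT; apply/negP => /le_foldmax h.
  by move: (leq_trans hs h); rewrite ltnn.
- by rewrite /= sL.
- by move=> t; rewrite in_cons => /orP[/eqP ->|]; [|apply: LS].
Qed.

Lemma sum_seq_delta (K : fieldType) (F : nat -> K) (L : seq nat) t :
  uniq L -> \sum_(s <- L) F s * (if t == s then 1 else 0) = if t \in L then F t else 0.
Proof.
elim: L => [|y L IH]; first by rewrite big_nil.
rewrite /= big_cons in_cons => /andP[yL uL]; rewrite IH //.
case: eqP => [e|ne] /=.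
  by rewrite mulr1 -e; rewrite -e in yL; rewrite (negbTE yL) addr0.
by rewrite mulr0 add0r.
Qed.
Lemma sum_ord_delta (K : fieldType) n (i0 : 'I_n) (c : K) (g : 'I_n -> K) :
  \sum_(i < n) (if i == i0 then c else 0) * g i = c * g i0.
Proof.
rewrite (bigD1 i0) //= eqxx big1 ?addr0 // => i hi; by rewrite (negbTE hi) mul0r.
Qed.

Lemma SPAN (K : fieldType) (H : nat -> nat -> K) n (f : 'I_n -> nat) :
  quasi_hermite H -> (forall t, inaccessible H t -> exists i, f i = t) ->
  forall N x, vanish x N -> exists a : 'I_n -> K, rs H (fun k => x k - \sum_(i < n) a i * ev K (f i) k).
Proof.
move=> hq cov; have [hrf [hlt hone]] := hq.
elim => [|N IH] x hx.
  exists (fun _ => 0); apply: rs_ext (rs0 H) _ => k.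
  by rewrite hx // big1 ?subr0 // => i _; rewrite mul0r.
case: (classic (inaccessible H N)) => hN.
  have [i0 e0] := cov N hN.
  have hv : vanish (fun k => x k - x N * ev K N k) N.
    move=> k hk; rewrite /ev; case: eqP => [->|ne]; first by rewrite mulr1 subrr.
    rewrite mulr0 subr0 hx //; rewrite ltn_neqAle hk andbT; by apply/eqP => e; apply: ne.
  have [a' ha'] := IH _ hv.
  exists (fun i => a' i + (if i == i0 then x N else 0)); apply: rs_ext ha' _ => k.
  under eq_bigr do rewrite mulrDl.
  rewrite big_split /= (sum_ord_delta i0 (x N) (fun i => ev K (f i) k)) e0.
  by rewrite opprD addrA addrAC.
have [j hj] : exists j, is_length (H j) N by apply: NNPP.
have hv : vanish (fun k => x k - x N * H j k) N.
  move=> k hk; rewrite leq_eqVlt in hk; case/orP: hk => [/eqP <-|hk].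
    by rewrite (hone j N hj).1 mulr1 subrr.
  by rewrite hx // hj.2 // mulr0 subr0.
have [a' ha'] := IH _ hv.
exists a'; apply: rs_ext (rs_lin 1 (x N) ha' (rs_row H j)) _ => k.
by rewrite mul1r addrAC addrNK.
Qed.

Lemma no_big (K : fieldType) (A P H : nat -> nat -> K) d (L : seq nat) :
  codim A d -> matmul_eq P H A -> quasi_hermite H ->
  uniq L -> size L = d.+1 -> (forall t, t \in L -> inaccessible H t) -> False.
Proof.
move=> [v [hv [hspan _]]] hPHA hq uL sL LS.
pose f (i : 'I_d.+1) := nth 0%N L i.
have finj : injective f.
  by move=> i j /eqP; rewrite /f nth_uniq ?sL // => /eqP; apply: val_inj.
have fS : forall i, inaccessible H (f i) by move=> i; apply: LS; rewrite mem_nth // sL.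
have : forall i : 'I_d.+1, exists a : 'I_d -> K,
    rowspace A (fun k => ev K (f i) k - \sum_(j < d) a j * v j k).
  move=> i; apply: hspan; exists (f i).+1 => k hk; rewrite /ev; case: eqP => // e.
  by move: hk; rewrite e ltnn.
move=> /fin_all_exists [a ha].
pose M : 'M[K]_(d.+1, d) := \matrix_(i, j) a i j.
have : kermx M != 0.
  rewrite -mxrank_eq0 mxrank_ker subn_eq0 -ltnNge ltnS; exact: rank_leq_col.
case/rowV0Pn => u /sub_kermxP uM unz.
have hr : rs A (fun k => \sum_(i < d.+1) u 0 i * ev K (f i) k).
  apply: rs_ext (@rs_sum _ _ d.+1 (fun i => u 0 i) (fun i k => ev K (f i) k - \sum_(j < d) a i j * v j k) (fun i => (rowspace_rs _ _).1 (ha i))) _.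
  move=> k; under [RHS]eq_bigr do rewrite mulrBr.
  rewrite sumrB.
  suff -> : \sum_(i < d.+1) u 0 i * (\sum_(j < d) a i j * v j k) = 0 by rewrite subr0.
  rewrite (eq_bigr (fun i => \sum_(j < d) u 0 i * a i j * v j k)); last first.
    by move=> i _; rewrite mulr_sumr; apply: eq_bigr => j _; rewrite mulrA.
  rewrite exchange_big /= big1 // => j _; rewrite -mulr_suml.
  have : (u *m M) 0 j = 0 by rewrite uM mxE.
  rewrite mxE => e.
  have e' : \sum_(i < d.+1) u 0 i * a i j = 0 by rewrite -[RHS]e; apply: eq_bigr => i _; rewrite mxE.
  by rewrite e' mul0r.
have h0 := INDEP hq finj fS (rs_trans hPHA hr).
move: unz; rewrite (_ : u = 0) ?eqxx //.
by apply/matrixP => i j; rewrite ord1 !mxE h0.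
Qed.
Theorem theorem5 (K : fieldType) (A Q H : nat -> nat -> K) :
  row_finite A -> finite_deficiency A ->
  nonsingular Q -> matmul_eq Q A H -> quasi_hermite H ->
  exists sS : seq nat,
    uniq sS /\ (forall t, t \in sS <-> inaccessible H t) /\
    (forall s, s \in sS -> rns A (xi H s)) /\
    (forall c : nat -> K, (forall t, \sum_(s <- sS) c s * xi H s t = 0) ->
       forall s, s \in sS -> c s = 0) /\
    (forall x, rns A x -> forall t, x t = \sum_(s <- sS) x s * xi H s t) /\
    codim A (size sS).
Proof.
move=> hA [d hcod] hQ hQA hq.
have [hQrf [P [hPrf [hPQ hQP]]]] := hQ.
have [hrf [hlt hone]] := hq.
have hPHA := L2 hPQ hQA.
have [B hB] : exists B, forall s, inaccessible H s -> (s < B)%N.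
  apply: NNPP => nb.
  have g : forall B, exists s, (B <= s)%N /\ inaccessible H s.
    move=> B; apply: NNPP => nx; apply: nb; exists B => s hs.
    rewrite ltnNge; apply/negP => hBs; by apply: nx; exists s.
  have [L [uL [sL LS]]] := list_grow g d.+1.
  exact: (no_big hcod hPHA hq uL sL LS).
pose pb t := if excluded_middle_informative (inaccessible H t) then true else false.
have pbP t : pb t <-> inaccessible H t.
  by rewrite /pb; case: excluded_middle_informative.
pose sS := [seq t <- iota 0 B | pb t].
have memS t : t \in sS <-> inaccessible H t.
  rewrite mem_filter mem_iota /= add0n; split; first by move=> /andP[/pbP].
  by move=> h; apply/andP; split; [apply/pbP | apply: hB].
have uS : uniq sS by rewrite filter_uniq // iota_uniq.
exists sS; split => //; split => //; split.
  by move=> s /memS hs; apply: (L3 hPHA hA (Hxi hq hs)).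
split.
  move=> c hc s /memS hs; have := hc s.
  under eq_bigr do rewrite (xi_inacc _ hs).
  rewrite sum_seq_delta // ifT //; exact/memS.
split.
  move=> x hx t; have hHx := L3 hQA hrf hx.
  case: (classic (exists j, is_length (H j) t)) => [[j hj]|nt]; last first.
    under eq_bigr do rewrite (xi_inacc _ nt).
    rewrite sum_seq_delta // ifT //; exact/memS.
  under eq_bigr do rewrite (xi_acc _ hq hj).
  have [N [hN hs0]] := hHx j.
  have e1 : \sum_(k < t.+1) H j k * x k = 0.
    rewrite -[RHS]hs0; apply: (@sum_ext _ (fun k => H j k * x k)) => k hk.
      by rewrite hj.2 // mul0r.
    by rewrite hN // mul0r.
  move: e1; rewrite big_ord_recr /= (hone j t hj).1 mul1r.
  pose G k := if pb k then H j k * x k else 0.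
  have e2 : \sum_(k < t) H j k * x k = \sum_(s <- sS) H j s * x s.
    rewrite big_filter.
    have -> : iota 0 B = index_iota 0 B by rewrite /index_iota subn0.
    rewrite big_mkord [RHS]big_mkcond /=.
    transitivity (\sum_(k < t) G k).
      apply: eq_bigr => k _; rewrite /G; case: ifP => // /negP npb.
      have [j' hj'] : exists j', is_length (H j') k.
        apply: NNPP => nk; apply: npb; exact/pbP.
      have ne : j != j'.
        apply/eqP => e; rewrite -e in hj'.
        have e2 : (k : nat) = t := esym (len_uniq hj hj').
        by have := ltn_ord k; rewrite [X in (X < _)%N]e2 ltnn.
      by rewrite ((hone j' k hj').2 j ne) mul0r.
    apply: (@sum_ext _ G) => k hk; rewrite /G; case: ifP => // /pbP hk'.
      rewrite hj.2 ?mul0r // ltn_neqAle hk andbT.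
      by apply/eqP => e; apply: hk'; exists j; rewrite -e.
    by move: (hB k hk'); rewrite ltnNge hk.
  rewrite e2 => e3.
  rewrite (eq_bigr (fun s => - (H j s * x s))); last by move=> s _; rewrite mulrN mulrC.
  rewrite sumrN; apply/eqP; rewrite -addr_eq0 addrC e3 //.
exists (fun i k => ev K (nth 0%N sS i) k); split.
  by move=> i; exists (nth 0%N sS i).+1 => k hk; rewrite /ev; case: eqP => // e; move: hk; rewrite e ltnn.
have finj : injective (fun i : 'I_(size sS) => nth 0%N sS i).
  by move=> i j /eqP; rewrite nth_uniq // => /eqP; apply: val_inj.
split.
  move=> x [N hN].
  have cov : forall t, inaccessible H t -> exists i : 'I_(size sS), nth 0%N sS i = t.
    move=> t /memS ht; have hi : (index t sS < size sS)%N by rewrite index_mem.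
    exists (Ordinal hi).
    by rewrite /= nth_index.
  have [a ha] := SPAN hq cov hN.
  by exists a; apply/rowspace_rs; apply: (rs_trans hQA ha).
move=> a /rowspace_rs /(rs_trans hPHA) h.
apply: (INDEP hq finj _ h) => i; apply/memS; exact: mem_nth.
Qed.
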